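(* Let $(X,\rho)$ be a compact metric space with at least two points and let $T\colon X\to X$ be continuous and topologically weakly mixing. Then for every $d>1$ there is $\delta_d>0$ such that the set of $\delta_d$-Li-Yorke $d$-tuples is residual in $X^d$.
   Context: $T$ is topologically weakly mixing if $T\times T$ is topologically transitive on $X\times X$. A $d$-tuple is $\delta$-Li-Yorke if $\liminf_n\max_{i,j}\rho(T^nx_i,T^nx_j)=0$ and $\limsup_n\min_{i\ne j}\rho(T^nx_i,T^nx_j)>\delta$. Residual means containing a dense $G_\delta$ set. *)

(* Defs.v *)
From Stdlib Require Import Reals.
Open Scope R_scope.

Definition is_metric {X : Type} (rho : X -> X -> R) : Prop :=
  (forall x y, 0 <= rho x y) /\
  (forall x y, rho x y = 0 <-> x = y) /\
  (forall x y, rho x y = rho y x) /\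
  (forall x y z, rho x z <= rho x y + rho y z).

Definition open_in {X : Type} (rho : X -> X -> R) (U : X -> Prop) : Prop :=
  forall x, U x -> exists eps, 0 < eps /\ forall y, rho x y < eps -> U y.

Definition compact_metric {X : Type} (rho : X -> X -> R) : Prop :=
  forall (I : Type) (U : I -> X -> Prop),
    (forall i, open_in rho (U i)) ->
    (forall x, exists i, U i x) ->
    exists l : list I, forall x, exists i, List.In i l /\ U i x.

Definition continuous_map {X : Type} (rho : X -> X -> R) (T : X -> X) : Prop :=
  forall x eps, 0 < eps -> exists del, 0 < del /\
    forall y, rho x y < del -> rho (T x) (T y) < eps.

Definition iterate {X : Type} (T : X -> X) (n : nat) (x : X) : X :=
  Nat.iter n T x.

Definition open_in2 {X : Type} (rho : X -> X -> R) (W : X * X -> Prop) : Prop :=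
  forall p, W p -> exists eps, 0 < eps /\
    forall q, rho (fst p) (fst q) < eps -> rho (snd p) (snd q) < eps -> W q.

(* T x T is topologically transitive on X x X:
   for nonempty open U, V there is n >= 1 with (T x T)^{-n} U meeting V. *)
Definition weakly_mixing {X : Type} (rho : X -> X -> R) (T : X -> X) : Prop :=
  forall U V : X * X -> Prop,
    open_in2 rho U -> open_in2 rho V ->
    (exists p, U p) -> (exists p, V p) ->
    exists n : nat, (1 <= n)%nat /\
      exists p, V p /\ U (iterate T n (fst p), iterate T n (snd p)).

Definition idx (d : nat) : Type := {i : nat | (i < d)%nat}.
Definition tuple_sp (X : Type) (d : nat) : Type := idx d -> X.

Definition open_in_d {X : Type} (rho : X -> X -> R) (d : nat)
    (W : tuple_sp X d -> Prop) : Prop :=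
  forall x, W x -> exists eps, 0 < eps /\
    forall y : tuple_sp X d, (forall i, rho (x i) (y i) < eps) -> W y.

Definition dense_in_d {X : Type} (rho : X -> X -> R) (d : nat)
    (S : tuple_sp X d -> Prop) : Prop :=
  forall W, open_in_d rho d W -> (exists x, W x) -> exists x, W x /\ S x.

Definition G_delta_d {X : Type} (rho : X -> X -> R) (d : nat)
    (S : tuple_sp X d -> Prop) : Prop :=
  exists W : nat -> tuple_sp X d -> Prop,
    (forall n, open_in_d rho d (W n)) /\
    (forall x, S x <-> forall n, W n x).

Definition residual_d {X : Type} (rho : X -> X -> R) (d : nat)
    (S : tuple_sp X d -> Prop) : Prop :=
  exists G, G_delta_d rho d G /\ dense_in_d rho d G /\ forall x, G x -> S x.

(* delta-Li-Yorke d-tuple: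
   liminf_n max_{i,j} rho(T^n x_i, T^n x_j) = 0  (the sequence is >= 0), and
   limsup_n min_{i<>j} rho(T^n x_i, T^n x_j) > delta. *)
Definition li_yorke_tuple {X : Type} (rho : X -> X -> R) (T : X -> X)
    (d : nat) (delta : R) (x : tuple_sp X d) : Prop :=
  (forall eps, 0 < eps -> forall N : nat, exists n : nat, (N <= n)%nat /\
     forall i j : idx d, rho (iterate T n (x i)) (iterate T n (x j)) < eps) /\
  (exists c, delta < c /\ forall N : nat, exists n : nat, (N <= n)%nat /\
     forall i j : idx d, proj1_sig i <> proj1_sig j ->
       c < rho (iterate T n (x i)) (iterate T n (x j))).

(* Main.v *)
Require Import Defs.
From Stdlib Require Import Reals Lra Lia List ClassicalEpsilon Classical ZArith.
Open Scope R_scope.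

Definition hit {X : Type} (T : X -> X) (A B : X -> Prop) (n : nat) : Prop :=
  exists x, B x /\ A (iterate T n x).


Lemma met_pos {X} (rho : X -> X -> R) : is_metric rho -> forall x y, 0 <= rho x y.
Proof. intros [H _]; exact H. Qed.
Lemma met_refl {X} (rho : X -> X -> R) : is_metric rho -> forall x, rho x x = 0.
Proof. intros [_ [H _]] x; apply H; reflexivity. Qed.
Lemma met_eq {X} (rho : X -> X -> R) : is_metric rho -> forall x y, rho x y = 0 -> x = y.
Proof. intros [_ [H _]] x y; apply H. Qed.
Lemma met_sym {X} (rho : X -> X -> R) : is_metric rho -> forall x y, rho x y = rho y x.
Proof. intros [_ [_ [H _]]]; exact H. Qed.
Lemma met_tri {X} (rho : X -> X -> R) : is_metric rho -> forall x y z, rho x z <= rho x y + rho y z.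
Proof. intros [_ [_ [_ H]]]; exact H. Qed.

Lemma ball_open {X} (rho : X -> X -> R) (Hm : is_metric rho) x r :
  open_in rho (fun y => rho x y < r).
Proof.
  intros y Hy. exists (r - rho x y). split; [lra|].
  intros z Hz. pose proof (met_tri rho Hm x y z). lra.
Qed.

Lemma open_inter {X} (rho : X -> X -> R) U V :
  open_in rho U -> open_in rho V -> open_in rho (fun x => U x /\ V x).
Proof.
  intros HU HV x [Ux Vx]. destruct (HU x Ux) as [e1 [He1 H1]].
  destruct (HV x Vx) as [e2 [He2 H2]]. exists (Rmin e1 e2). split.
  - apply Rmin_glb_lt; lra.
  - intros y Hy. split; [apply H1 | apply H2];
    eapply Rlt_le_trans; eauto; [apply Rmin_l | apply Rmin_r].
Qed.

Lemma open_full {X} (rho : X -> X -> R) : open_in rho (fun _ => True).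
Proof. intros x _; exists 1; split; [lra| auto]. Qed.

Lemma iterate_S {X} (T : X -> X) n x : iterate T (S n) x = T (iterate T n x).
Proof. reflexivity. Qed.

Lemma iterate_add {X} (T : X -> X) m n x : iterate T (m + n) x = iterate T m (iterate T n x).
Proof. unfold iterate; apply Nat.iter_add. Qed.

Lemma iterate_cont {X} (rho : X -> X -> R) T : continuous_map rho T ->
  forall n, continuous_map rho (iterate T n).
Proof.
  intros HT n; induction n as [|n IH]; intros x eps He.
  - exists eps; split; auto.
  - destruct (HT (iterate T n x) eps He) as [d1 [Hd1 H1]].
    destruct (IH x d1 Hd1) as [d2 [Hd2 H2]].
    exists d2; split; auto. intros y Hy. rewrite !iterate_S. apply H1, H2, Hy.
Qed.

Lemma preim_open {X} (rho : X -> X -> R) f U : continuous_map rho f -> open_in rho U ->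
  open_in rho (fun x => U (f x)).
Proof.
  intros Hf HU x Hx. destruct (HU _ Hx) as [e [He H]].
  destruct (Hf x e He) as [d [Hd H2]]. exists d; split; auto.
Qed.

Lemma prod_open2 {X} (rho : X -> X -> R) U V : open_in rho U -> open_in rho V ->
  open_in2 rho (fun p => U (fst p) /\ V (snd p)).
Proof.
  intros HU HV p [Up Vp]. destruct (HU _ Up) as [e1 [He1 H1]].
  destruct (HV _ Vp) as [e2 [He2 H2]]. exists (Rmin e1 e2). split.
  - apply Rmin_glb_lt; lra.
  - intros q Hq1 Hq2. split; [apply H1 | apply H2];
    eapply Rlt_le_trans; eauto; [apply Rmin_l | apply Rmin_r].
Qed.

Lemma choice_fun {A B : Type} (P : A -> B -> Prop) : (forall a, exists b, P a b) ->
  exists f : A -> B, forall a, P a (f a).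
Proof.
  intros H. exists (fun a => proj1_sig (constructive_indefinite_description _ (H a))).
  intros a. exact (proj2_sig (constructive_indefinite_description _ (H a))).
Qed.

Lemma unif {I : Type} (l : list I) (P : I -> R -> Prop) :
  (forall i e e', 0 < e' -> e' <= e -> P i e -> P i e') ->
  (forall i, exists e, 0 < e /\ P i e) -> exists e, 0 < e /\ forall i, In i l -> P i e.
Proof.
  intros Hmon Hex. induction l as [|a l IH].
  - exists 1; split; [lra | intros i []].
  - destruct IH as [e1 [He1 H1]]. destruct (Hex a) as [e2 [He2 H2]].
    exists (Rmin e1 e2). assert (0 < Rmin e1 e2) by (apply Rmin_glb_lt; lra).
    split; auto. intros i [<-|Hi].
    + eapply Hmon; eauto. apply Rmin_r.
    + eapply Hmon; [| |apply H1]; eauto. apply Rmin_l.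
Qed.

Lemma idx_enum d : exists l : list (idx d), forall i, In i l.
Proof.
  induction d as [|d [l IH]].
  - exists nil. intros [i Hi]. lia.
  - exists (exist _ d (Nat.lt_succ_diag_r d) ::
      map (fun j : idx d => exist (fun i => (i < S d)%nat) (proj1_sig j) (Nat.lt_lt_succ_r _ _ (proj2_sig j))) l).
    intros [i Hi]. destruct (Nat.eq_dec i d) as [->|Hne].
    + left. f_equal. apply proof_irrelevance.
    + right. assert (Hi' : (i < d)%nat) by lia.
      apply (in_map_iff). exists (exist _ i Hi'). split; [|apply IH].
      simpl. f_equal. apply proof_irrelevance.
Qed.

Lemma unif_idx {d} (P : idx d -> R -> Prop) :
  (forall i e e', 0 < e' -> e' <= e -> P i e -> P i e') ->
  (forall i, exists e, 0 < e /\ P i e) -> exists e, 0 < e /\ forall i, P i e.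
Proof.
  intros H1 H2. destruct (idx_enum d) as [l Hl].
  destruct (unif l P H1 H2) as [e [He H]]. exists e; split; auto.
Qed.

Lemma perfect {X} (rho : X -> X -> R) T (Hm : is_metric rho)
  (Htwo : exists a b : X, a <> b) (Hwm : weakly_mixing rho T) :
  forall x r, 0 < r -> exists y, y <> x /\ rho x y < r.
Proof.
  intros x r Hr. apply NNPP; intro Hn.
  assert (Hiso : forall y, rho x y < r -> y = x).
  { intros y Hy. apply NNPP; intro Hne. apply Hn. exists y; auto. }
  assert (Hq : exists q, q <> x).
  { destruct Htwo as [a [b Hab]]. destruct (classic (a = x)) as [->|H].
    - exists b; auto. - exists a; auto. }
  destruct Hq as [q Hq].
  assert (Hox : open_in rho (fun y => y = x)).
  { intros y -> . exists r; split; [exact Hr|]. intros z Hz; apply Hiso; exact Hz. }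
  destruct (Hwm (fun p => fst p = x /\ rho q (snd p) < rho q x)
                (fun p => fst p = x /\ snd p = x)) as [n [_ [p [[H1 H2] [H3 H4]]]]].
  - apply (prod_open2 rho (fun y => y = x) (fun y => rho q y < rho q x)); [exact Hox | apply ball_open; auto].
  - apply (prod_open2 rho (fun y => y = x) (fun y => y = x)); exact Hox.
  - exists (x, q). simpl. split; auto. rewrite met_refl by auto.
    destruct (Rle_lt_or_eq_dec 0 (rho q x)) as [h|h]; [apply met_pos; auto|auto|].
    exfalso; apply Hq, met_eq with rho; auto.
  - exists (x, x); simpl; auto.
  - destruct p as [p1 p2]; simpl in *. subst. rewrite H3 in H4. lra.
Qed.

Lemma surj {X} (rho : X -> X -> R) T (Hm : is_metric rho) (Hc : compact_metric rho)
  (Hcont : continuous_map rho T) (Hwm : weakly_mixing rho T) :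
  forall y, exists x, T x = y.
Proof.
  intros y. apply NNPP; intro Hn.
  assert (Hpos : forall x, 0 < rho (T x) y).
  { intros x. destruct (Rle_lt_or_eq_dec 0 (rho (T x) y)) as [h|h]; [apply met_pos; auto|auto|].
    exfalso; apply Hn; exists x; apply met_eq with rho; auto. }
  destruct (Hc nat (fun k x => / INR (S k) < rho (T x) y)) as [l Hl].
  - intros k. apply (preim_open rho T (fun z => / INR (S k) < rho z y)); auto.
    intros z Hz. exists (rho z y - / INR (S k)). split; [lra|].
    intros w Hw. pose proof (met_tri rho Hm z w y). pose proof (met_sym rho Hm z w). lra.
  - intros x. destruct (archimed (/ rho (T x) y)) as [H1 _].
    pose proof (Hpos x).
    assert (0 < / rho (T x) y) by (apply Rinv_0_lt_compat; auto).
    assert (Hup : (0 < up (/ rho (T x) y))%Z) by (apply lt_IZR; lra).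
    exists (Z.to_nat (up (/ rho (T x) y))).
    rewrite S_INR, INR_IZR_INZ, Z2Nat.id by lia.
    set (u := IZR (up (/ rho (T x) y))) in *.
    set (r0 := rho (T x) y) in *.
    replace r0 with (/ / r0) by (apply Rinv_inv).
    apply Rinv_lt_contravar.
    + apply Rmult_lt_0_compat; lra.
    + lra.
  - set (K := list_max l).
    assert (HK : forall x, / INR (S K) < rho (T x) y).
    { intros x. destruct (Hl x) as [k [Hk Hx]].
      assert (k <= K)%nat.
      { unfold K. pose proof (proj1 (list_max_le l (list_max l)) (le_n _)) as HF.
        rewrite Forall_forall in HF. apply HF; auto. }
      eapply Rle_lt_trans; [|exact Hx]. apply Rinv_le_contravar.
      - apply lt_0_INR; lia. - apply le_INR; lia. }
    assert (HKp : 0 < / INR (S K)) by (apply Rinv_0_lt_compat, lt_0_INR; lia).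
    destruct (Hwm (fun p => rho y (fst p) < / INR (S K) /\ rho y (snd p) < / INR (S K))
                  (fun p => True /\ True)) as [n [Hn1 [p [_ [H1 _]]]]].
    + apply (prod_open2 rho (fun z => rho y z < / INR (S K)) (fun z => rho y z < / INR (S K))); apply ball_open; auto.
    + apply (prod_open2 rho (fun _ => True) (fun _ => True)); apply open_full.
    + exists (y, y); simpl; rewrite met_refl; auto.
    + exists (y, y); auto.
    + cbn [fst snd] in H1. destruct n as [|n]; [lia|]. rewrite iterate_S in H1.
      specialize (HK (iterate T n (fst p))). rewrite met_sym in H1; auto. lra.
Qed.

Lemma surj_iter {X} (T : X -> X) : (forall y, exists x, T x = y) ->
  forall n y, exists x, iterate T n x = y.
Proof.
  intros H n; induction n as [|n IH]; intros y.
  - exists y; reflexivity.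
  - destruct (H y) as [z <-]. destruct (IH z) as [x <-]. exists x. reflexivity.
Qed.

Definition neo {X} (rho : X -> X -> R) (A : X -> Prop) := open_in rho A /\ exists x, A x.

Lemma common {X} (rho : X -> X -> R) T (Hwm : weakly_mixing rho T) A B :
  neo rho A -> neo rho B -> exists n, (1 <= n)%nat /\ hit T A B n.
Proof.
  intros [HA [a Ha]] [HB [b Hb]].
  destruct (Hwm (fun p => A (fst p) /\ A (snd p)) (fun p => B (fst p) /\ B (snd p)))
    as [n [Hn [p [[H1 _] [H2 _]]]]].
  - apply (prod_open2 rho A A); auto. - apply (prod_open2 rho B B); auto.
  - exists (a, a); simpl; auto. - exists (b, b); simpl; auto.
  - exists n; split; auto. exists (fst p); auto.
Qed.

Lemma pair_reduce {X} (rho : X -> X -> R) T (Hcont : continuous_map rho T)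
  (Hwm : weakly_mixing rho T) A1 B1 A2 B2 :
  neo rho A1 -> neo rho B1 -> neo rho A2 -> neo rho B2 ->
  exists A B, neo rho A /\ neo rho B /\
    forall n, hit T A B n -> hit T A1 B1 n /\ hit T A2 B2 n.
Proof.
  intros [HA1 [a1 Ha1]] [HB1 [b1 Hb1]] [HA2 [a2 Ha2]] [HB2 [b2 Hb2]].
  destruct (Hwm (fun p => A2 (fst p) /\ B2 (snd p)) (fun p => A1 (fst p) /\ B1 (snd p)))
    as [m [_ [p [[H1 H2] [H3 H4]]]]].
  - apply (prod_open2 rho A2 B2); auto. - apply (prod_open2 rho A1 B1); auto.
  - exists (a2, b2); simpl; auto. - exists (a1, b1); simpl; auto.
  - exists (fun x => A1 x /\ A2 (iterate T m x)), (fun x => B1 x /\ B2 (iterate T m x)).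
    split; [split|split; [split|]].
    + apply open_inter; auto. apply preim_open; auto. apply iterate_cont; auto.
    + exists (fst p); auto.
    + apply open_inter; auto. apply preim_open; auto. apply iterate_cont; auto.
    + exists (snd p); auto.
    + intros n [z [[Hz1 Hz2] [Hz3 Hz4]]]. split.
      * exists z; auto.
      * exists (iterate T m z). split; auto.
        rewrite <- iterate_add, Nat.add_comm, iterate_add. exact Hz4.
Qed.

Lemma multi {X} (rho : X -> X -> R) T (Hcont : continuous_map rho T)
  (Hwm : weakly_mixing rho T) (x0 : X) {I : Type} (F : I -> (X -> Prop) * (X -> Prop)) :
  (forall i, neo rho (fst (F i)) /\ neo rho (snd (F i))) ->
  forall l : list I, exists A B, neo rho A /\ neo rho B /\
    forall n, hit T A B n -> forall i, In i l -> hit T (fst (F i)) (snd (F i)) n.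
Proof.
  intros HF l. induction l as [|a l IH].
  - exists (fun _ => True), (fun _ => True).
    split; [split; [apply open_full| exists x0; auto]|].
    split; [split; [apply open_full| exists x0; auto]|].
    intros n _ i [].
  - destruct IH as [A [B [HA [HB H]]]].
    destruct (HF a) as [Ha1 Ha2].
    destruct (pair_reduce rho T Hcont Hwm _ _ _ _ HA HB Ha1 Ha2) as [A' [B' [HA' [HB' H']]]].
    exists A', B'. split; auto. split; auto.
    intros n Hn i [<-|Hi]; destruct (H' n Hn); auto.
Qed.

Lemma dense_hit {X} (rho : X -> X -> R) T (Hm : is_metric rho) (Hc : compact_metric rho)
  (Hcont : continuous_map rho T) (Hwm : weakly_mixing rho T) d
  (W : tuple_sp X d -> Prop) (Tg : idx d -> X -> Prop) m (xx : X) :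
  open_in_d rho d W -> (exists x, W x) -> (forall j, neo rho (Tg j)) ->
  exists y n, W y /\ forall j, Tg j (iterate T (m + n) (y j)).
Proof.
  intros HW [x0 Hx0] HT. destruct (HW x0 Hx0) as [eps [He HWe]].
  destruct (idx_enum d) as [l Hl].
  set (F := fun j : idx d => ((fun z => Tg j (iterate T m z)), (fun z => rho (x0 j) z < eps))).
  destruct (multi rho T Hcont Hwm xx F) with (l := l) as [A [B [HA [HB H]]]].
  { intros j. destruct (HT j) as [HO [t Ht]]. split; simpl.
    - split. + apply preim_open; auto. apply iterate_cont; auto.
      + destruct (surj_iter T (surj rho T Hm Hc Hcont Hwm) m t) as [z Hz].
        exists z; rewrite Hz; auto.
    - split; [apply ball_open; auto|]. exists (x0 j). rewrite met_refl; auto. }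
  destruct (common rho T Hwm A B HA HB) as [n [_ Hn]].
  pose proof (H n Hn) as H2.
  destruct (choice_fun (fun j y => rho (x0 j) y < eps /\ Tg j (iterate T m (iterate T n y))))
    as [y Hy].
  { intros j. destruct (H2 j (Hl j)) as [z [Hz1 Hz2]]. exists z; auto. }
  exists y, n. split.
  - apply HWe. intros i; apply Hy.
  - intros j. rewrite iterate_add. apply Hy.
Qed.

Lemma cpt_lim {X} (rho : X -> X -> R) (Hm : is_metric rho) (Hc : compact_metric rho)
  (a : nat -> X) (r : nat -> R) :
  (forall k m, (k <= m)%nat -> rho (a k) (a m) <= r k) ->
  exists z, forall k, rho (a k) z <= r k.
Proof.
  intros H. apply NNPP; intro Hn.
  destruct (Hc nat (fun k z => r k < rho (a k) z)) as [l Hl].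
  - intros k z Hz. exists (rho (a k) z - r k). split; [lra|].
    intros w Hw. pose proof (met_tri rho Hm (a k) w z). pose proof (met_sym rho Hm z w). lra.
  - intros z. apply NNPP; intro Hz. apply Hn. exists z. intros k.
    apply Rnot_lt_le. intro Hk. apply Hz. exists k. exact Hk.
  - destruct (Hl (a (list_max l))) as [k [Hk Hk2]].
    assert (k <= list_max l)%nat.
    { pose proof (proj1 (list_max_le l (list_max l)) (le_n _)) as HF.
      rewrite Forall_forall in HF. apply HF; auto. }
    specialize (H k (list_max l) H0). lra.
Qed.

Definition obox {X} (rho : X -> X -> R) {d} (s : tuple_sp X d * R) : tuple_sp X d -> Prop :=
  fun y => forall i, rho (fst s i) (y i) < snd s.

Lemma obox_open {X} (rho : X -> X -> R) (Hm : is_metric rho) d (s : tuple_sp X d * R) :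
  open_in_d rho d (obox rho s).
Proof.
  intros y Hy. destruct (unif_idx (fun i e => e <= snd s - rho (fst s i) (y i))) as [e [He H]].
  - intros i e e' _ h1 h2. lra.
  - intros i. exists (snd s - rho (fst s i) (y i)). specialize (Hy i). split; lra.
  - exists e. split; auto. intros z Hz i. specialize (H i). specialize (Hz i).
    pose proof (met_tri rho Hm (fst s i) (y i) (z i)). lra.
Qed.

Lemma open_inter_d {X} (rho : X -> X -> R) d U V :
  open_in_d rho d U -> open_in_d rho d V -> open_in_d rho d (fun x => U x /\ V x).
Proof.
  intros HU HV x [Ux Vx]. destruct (HU x Ux) as [e1 [He1 H1]].
  destruct (HV x Vx) as [e2 [He2 H2]]. exists (Rmin e1 e2). split.
  - apply Rmin_glb_lt; lra.
  - intros y Hy. split; [apply H1 | apply H2]; intro i;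
    eapply Rlt_le_trans; eauto; [apply Rmin_l | apply Rmin_r].
Qed.

Definition Pst {X} (rho : X -> X -> R) {d} (D : nat -> tuple_sp X d -> Prop)
  (O : tuple_sp X d -> Prop) (n : nat) (s : tuple_sp X d * R) : Prop :=
  0 < snd s /\ forall y, (forall i, rho (fst s i) (y i) <= snd s) -> O y /\ D n y.

Fixpoint bseq {X} (rho : X -> X -> R) {d} (D : nat -> tuple_sp X d -> Prop)
  (W : tuple_sp X d -> Prop) (inh : inhabited (tuple_sp X d * R)) (k : nat)
  : tuple_sp X d * R :=
  match k with
  | O => epsilon inh (Pst rho D W 0)
  | S k => epsilon inh (Pst rho D (obox rho (bseq rho D W inh k)) (S k))
  end.

Lemma baire {X} (rho : X -> X -> R) (Hm : is_metric rho) (Hc : compact_metric rho) d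
  (D : nat -> tuple_sp X d -> Prop) :
  (forall n, open_in_d rho d (D n)) -> (forall n, dense_in_d rho d (D n)) ->
  dense_in_d rho d (fun x => forall n, D n x).
Proof.
  intros HO HD W HW [x0 Hx0].
  assert (step : forall O, open_in_d rho d O -> (exists x, O x) -> forall n,
     exists s, Pst rho D O n s).
  { intros O HOO HOn n. destruct (HD n O HOO HOn) as [x [Ox Dx]].
    destruct (open_inter_d rho d O (D n) HOO (HO n) x (conj Ox Dx)) as [e [He H]].
    exists (x, e / 2). split; simpl; [lra|]. intros y Hy. apply H. intros i.
    specialize (Hy i). lra. }
  set (inh := inhabits (x0, 1)).
  set (sq := bseq rho D W inh).
  assert (HQ : forall k, Pst rho D (match k with O => W | S k' => obox rho (sq k') end) k (sq k)).
  { intros k; induction k as [|k IH].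
    - unfold sq; cbn [bseq]. apply epsilon_spec. apply step; auto. exists x0; auto.
    - unfold sq; cbn [bseq]. apply epsilon_spec. fold sq. apply step; [apply obox_open; auto|].
      exists (fst (sq k)). intros i. rewrite met_refl by auto. apply IH. }
  assert (Hc1 : forall k y, (forall i, rho (fst (sq (S k)) i) (y i) <= snd (sq (S k))) ->
                 forall i, rho (fst (sq k) i) (y i) <= snd (sq k)).
  { intros k y Hy i. destruct (HQ (S k)) as [_ H]. destruct (H y Hy) as [H1 _].
    left; apply H1. }
  assert (Hc2 : forall k m y, (k <= m)%nat -> (forall i, rho (fst (sq m) i) (y i) <= snd (sq m)) ->
                 forall i, rho (fst (sq k) i) (y i) <= snd (sq k)).
  { intros k m y Hkm; induction Hkm; auto. }
  assert (Hlim : forall i, exists z, forall k, rho (fst (sq k) i) z <= snd (sq k)).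
  { intros i. apply cpt_lim; auto. intros k m Hkm.
    apply (Hc2 k m (fst (sq m)) Hkm). intros j. rewrite met_refl by auto.
    left; apply (HQ m). }
  destruct (choice_fun _ Hlim) as [z Hz].
  exists z. split.
  - destruct (HQ 0%nat) as [_ H]. apply H. intros i; apply Hz.
  - intros n. destruct (HQ n) as [_ H]. apply H. intros i; apply Hz.
Qed.

Lemma pair_open {X} (rho : X -> X -> R) T (Hcont : continuous_map rho T) d
  (x : tuple_sp X d) n (Rel : idx d -> idx d -> X -> X -> Prop) :
  (forall i j, exists eta, 0 < eta /\ forall u v,
     rho (iterate T n (x i)) u < eta -> rho (iterate T n (x j)) v < eta -> Rel i j u v) ->
  exists del, 0 < del /\ forall y : tuple_sp X d, (forall i, rho (x i) (y i) < del) ->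
    forall i j, Rel i j (iterate T n (y i)) (iterate T n (y j)).
Proof.
  intros H.
  destruct (unif_idx (fun i eta => forall j u v,
     rho (iterate T n (x i)) u < eta -> rho (iterate T n (x j)) v < eta -> Rel i j u v))
    as [eta [Heta Hu]].
  { intros i e e' _ Hle Hp j u v h1 h2. apply Hp; lra. }
  { intros i. destruct (unif_idx (fun j eta => forall u v,
       rho (iterate T n (x i)) u < eta -> rho (iterate T n (x j)) v < eta -> Rel i j u v))
      as [eta [Heta Hu]].
    { intros j e e' _ Hle Hp u v h1 h2. apply Hp; lra. }
    { intros j. apply H. }
    exists eta; split; auto. }
  destruct (unif_idx (fun i del => forall y, rho (x i) y < del ->
       rho (iterate T n (x i)) (iterate T n y) < eta)) as [del [Hdel Hd]].
  { intros i e e' _ Hle Hp y h. apply Hp; lra. }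
  { intros i. apply (iterate_cont rho T Hcont n (x i) eta Heta). }
  exists del; split; [exact Hdel|]. intros y Hy i j. apply Hu; apply Hd; apply Hy. Qed.

Lemma small_inv eps N : 0 < eps -> exists m, (N <= m)%nat /\ / INR (S m) < eps.
Proof.
  intros He. destruct (archimed (/ eps)) as [H1 _].
  assert (0 < / eps) by (apply Rinv_0_lt_compat; auto).
  assert (Hup : (0 < up (/ eps))%Z) by (apply lt_IZR; lra).
  exists (N + Z.to_nat (up (/ eps)))%nat. split; [lia|].
  assert (Hle : IZR (up (/ eps)) + 1 <= INR (S (N + Z.to_nat (up (/ eps))))).
  { rewrite S_INR, plus_INR, (INR_IZR_INZ (Z.to_nat _)), Z2Nat.id by lia. pose proof (pos_INR N). lra. }
  apply Rle_lt_trans with (/ (IZR (up (/ eps)) + 1)).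
  - apply Rinv_le_contravar; lra.
  - set (u := IZR (up (/ eps))) in *.
    replace eps with (/ / eps) by (apply Rinv_inv).
    apply Rinv_lt_contravar; [apply Rmult_lt_0_compat|]; lra.
Qed.

Fixpoint pseq {X} (rho : X -> X -> R) (a : X) (inh : inhabited X) (k : nat) : X :=
  match k with
  | O => epsilon inh (fun y => y <> a /\ rho a y < 1)
  | S k => epsilon inh (fun y => y <> a /\ rho a y < rho a (pseq rho a inh k) / 2)
  end.

Lemma pseq_spec {X} (rho : X -> X -> R) (Hm : is_metric rho) a inh
  (Hp : forall x r, 0 < r -> exists y, y <> x /\ rho x y < r) :
  forall k, pseq rho a inh k <> a /\ 0 < rho a (pseq rho a inh k) /\
    rho a (pseq rho a inh (S k)) < rho a (pseq rho a inh k) / 2.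
Proof.
  assert (Hpos : forall y, y <> a -> 0 < rho a y).
  { intros y Hy. destruct (Rle_lt_or_eq_dec 0 (rho a y)) as [h|h]; [apply met_pos; auto|auto|].
    exfalso; apply Hy; symmetry; apply met_eq with rho; auto. }
  assert (H0 : forall k, pseq rho a inh k <> a).
  { induction k as [|k IH].
    - cbn [pseq]. refine (proj1 (epsilon_spec inh (fun y => y <> a /\ rho a y < 1) _)). apply Hp; lra.
    - change (pseq rho a inh (S k)) with
          (epsilon inh (fun y => y <> a /\ rho a y < rho a (pseq rho a inh k) / 2)).
      refine (proj1 (epsilon_spec inh (fun y => y <> a /\ rho a y < rho a (pseq rho a inh k) / 2) _)).
      apply Hp. specialize (Hpos _ IH). lra. }
  intros k. split; [auto|]. split; [apply Hpos; auto|].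
  change (pseq rho a inh (S k)) with
          (epsilon inh (fun y => y <> a /\ rho a y < rho a (pseq rho a inh k) / 2)).
  refine (proj2 (epsilon_spec inh (fun y => y <> a /\ rho a y < rho a (pseq rho a inh k) / 2) _)).
  apply Hp. specialize (Hpos _ (H0 k)). lra.
Qed.

Lemma pseq_sep {X} (rho : X -> X -> R) (Hm : is_metric rho) a inh
  (Hp : forall x r, 0 < r -> exists y, y <> x /\ rho x y < r) d :
  0 < rho a (pseq rho a inh d) /\
  forall j k, (j < d)%nat -> (k < d)%nat -> j <> k ->
    rho a (pseq rho a inh d) / 2 < rho (pseq rho a inh j) (pseq rho a inh k).
Proof.
  set (r := fun k => rho a (pseq rho a inh k)).
  pose proof (pseq_spec rho Hm a inh Hp) as Hs.
  assert (Hmon : forall k m, (k <= m)%nat -> r m <= r k).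
  { intros k m Hkm; induction Hkm; [lra|]. pose proof (Hs m) as [_ [h1 h2]].
    unfold r in *. lra. }
  assert (Hlt : forall j k, (j < k)%nat -> r k < r j / 2).
  { intros j k Hjk. pose proof (Hmon (S j) k Hjk). pose proof (Hs j) as [_ [_ h]].
    unfold r in *. lra. }
  split; [apply Hs|].
  assert (Hw : forall j k, (j < k)%nat -> (k < d)%nat ->
     rho a (pseq rho a inh d) / 2 < rho (pseq rho a inh j) (pseq rho a inh k)).
  { intros j k Hjk Hkd. pose proof (Hlt j k Hjk). pose proof (Hmon j d ltac:(lia)).
    pose proof (met_tri rho Hm a (pseq rho a inh k) (pseq rho a inh j)).
    pose proof (met_sym rho Hm (pseq rho a inh k) (pseq rho a inh j)).
    unfold r in *. lra. }
  intros j k Hj Hk Hne. destruct (proj1 (Nat.lt_gt_cases j k) Hne) as [h|h].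
  - apply Hw; auto.
  - rewrite (met_sym rho Hm (pseq rho a inh j)). apply Hw; auto.
Qed.

Theorem mainTheorem9 (X : Type) (rho : X -> X -> R) (T : X -> X)
  (Hmetric : is_metric rho) (Hcompact : compact_metric rho)
  (Htwo : exists a b : X, a <> b)
  (Hcont : continuous_map rho T) (Hwm : weakly_mixing rho T) :
  forall d : nat, (1 < d)%nat ->
    exists delta_d : R, 0 < delta_d /\
      residual_d rho d (li_yorke_tuple rho T d delta_d).
Proof.
  intros d _.
  pose proof (perfect rho T Hmetric Htwo Hwm) as Hp.
  destruct Htwo as [a [b _]].
  set (inh := inhabits a).
  destruct (pseq_sep rho Hmetric a inh Hp d) as [Hs0 Hsep].
  set (s := rho a (pseq rho a inh d) / 2) in *.
  set (c := s / 2).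
  set (q := fun m => / INR (S m)).
  assert (Hq : forall m, 0 < q m) by (intros m; apply Rinv_0_lt_compat, lt_0_INR; lia).
  set (Am := fun (m : nat) (x : tuple_sp X d) => exists n, (m <= n)%nat /\
     forall i j, rho (iterate T n (x i)) (iterate T n (x j)) < q m).
  set (Bm := fun (m : nat) (x : tuple_sp X d) => exists n, (m <= n)%nat /\
     forall i j : idx d, proj1_sig i <> proj1_sig j ->
        c < rho (iterate T n (x i)) (iterate T n (x j))).
  assert (HAo : forall m, open_in_d rho d (Am m)).
  { intros m x [n [Hn H]].
    destruct (pair_open rho T Hcont d x n (fun _ _ u v => rho u v < q m)) as [del [Hdel Hd]].
    - intros i j. specialize (H i j).
      exists ((q m - rho (iterate T n (x i)) (iterate T n (x j))) / 2). split; [lra|].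
      intros u v h1 h2.
      pose proof (met_tri rho Hmetric u (iterate T n (x i)) v).
      pose proof (met_tri rho Hmetric (iterate T n (x i)) (iterate T n (x j)) v).
      pose proof (met_sym rho Hmetric u (iterate T n (x i))). lra.
    - exists del; split; auto. intros y Hy. exists n; split; auto. }
  assert (HBo : forall m, open_in_d rho d (Bm m)).
  { intros m x [n [Hn H]].
    destruct (pair_open rho T Hcont d x n
       (fun i j u v => proj1_sig i <> proj1_sig j -> c < rho u v)) as [del [Hdel Hd]].
    - intros i j. destruct (Nat.eq_dec (proj1_sig i) (proj1_sig j)) as [Heq|Hne].
      + exists 1. split; [lra|]. intros; contradiction.
      + specialize (H i j Hne).
        exists ((rho (iterate T n (x i)) (iterate T n (x j)) - c) / 2). split; [lra|].
        intros u v h1 h2 _.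
        pose proof (met_tri rho Hmetric (iterate T n (x i)) u (iterate T n (x j))).
        pose proof (met_tri rho Hmetric u v (iterate T n (x j))).
        pose proof (met_sym rho Hmetric v (iterate T n (x j))). lra.
    - exists del; split; auto. intros y Hy. exists n; split; [exact Hn|].
      intros i j. apply Hd; auto. }
  set (D := fun m x => Am m x /\ Bm m x).
  assert (HDo : forall m, open_in_d rho d (D m)).
  { intros m; apply open_inter_d; auto. }
  assert (Hball : forall z r, 0 < r -> neo rho (fun y => rho z y < r)).
  { intros z r Hr. split; [apply ball_open; auto|]. exists z. rewrite met_refl; auto. }
  assert (HDd : forall m, dense_in_d rho d (D m)).
  { intros m W HW HWn.
    destruct (dense_hit rho T Hmetric Hcompact Hcont Hwm d W (fun _ y => rho a y < q m / 2) m a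
       HW HWn) as [y [n [Wy Hy]]].
    { intros j. apply Hball. specialize (Hq m). lra. }
    assert (Ay : Am m y).
    { exists (m + n)%nat. split; [lia|]. intros i j. pose proof (Hy i). pose proof (Hy j).
      pose proof (met_tri rho Hmetric (iterate T (m + n) (y i)) a (iterate T (m + n) (y j))).
      pose proof (met_sym rho Hmetric (iterate T (m + n) (y i)) a). lra. }
    destruct (dense_hit rho T Hmetric Hcompact Hcont Hwm d (fun x => W x /\ Am m x)
       (fun j y => rho (pseq rho a inh (proj1_sig j)) y < s / 4) m a) as [z [n' [[Wz Az] Hz]]].
    { apply open_inter_d; auto. }
    { exists y; auto. }
    { intros j. apply Hball. unfold s; lra. }
    exists z. split; auto. split; auto. exists (m + n')%nat. split; [lia|].
    intros i j Hij. pose proof (Hz i). pose proof (Hz j).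
    pose proof (Hsep _ _ (proj2_sig i) (proj2_sig j) Hij).
    set (pi := pseq rho a inh (proj1_sig i)) in *.
    set (pj := pseq rho a inh (proj1_sig j)) in *.
    set (ui := iterate T (m + n') (z i)) in *.
    set (uj := iterate T (m + n') (z j)) in *.
    pose proof (met_tri rho Hmetric pi ui pj).
    pose proof (met_tri rho Hmetric ui uj pj).
    pose proof (met_sym rho Hmetric uj pj). unfold c. lra. }
  exists (s / 4). split; [unfold s; lra|].
  exists (fun x => forall n, D n x). split; [|split].
  - exists D. split; auto. intros x; tauto.
  - apply baire; auto.
  - intros x Hx. split.
    + intros eps He N. destruct (small_inv eps N He) as [m [Hm1 Hm2]].
      destruct (Hx m) as [[n [Hn H]] _]. exists n. split; [lia|].
      intros i j. specialize (H i j). unfold q in H. lra.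
    + exists c. split; [unfold c, s; lra|]. intros N.
      destruct (Hx N) as [_ [n [Hn H]]]. exists n; split; auto.
Qed.
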